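(* Let $n$ be a positive integer. If $l_2(n)=2^{k+1}s+\frac{1-(-2)^k}{3}$ for some nonnegative integer $k$ and integer $s$, then $l_2(n+1)=3^{k+1}s+\frac{1-(-3)^k}{2}$.
   Context: For a positive integer $m$, the triangle $T_m$ is an array whose row $x$ ($x=1,2,\dots$) has $x$ entries, in columns $0,\dots,x-1$. Row $1$ is the single entry $1$. For $x>1$, row $x$ is obtained from row $x-1$ by rotating it cyclically left by $m$ positions (the entry in column $c$ of row $x-1$ moves to column $(c-m)\bmod(x-1)\in\{0,\dots,x-2\}$ of row $x$), then appending in column $x-1$ a new entry equal to $1$ plus the entry in column $0$ of row $x-1$. $T_m(x,c)$ denotes the entry in row $x$, column $c$. Define $l_m(1)=1$ and, for $n\ge2$, $l_m(n)=\min\{x>l_m(n-1): T_m(x,0)=1\}$. Here $m=2$ (in $T_2$ the value $1$ heads infinitely many rows, so $l_2(n)$ is defined for all $n$). *)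

(* Defs.v *)
From mathcomp Require Import all_boot all_algebra.
Set Implicit Arguments. Unset Strict Implicit. Unset Printing Implicit Defensive.

(* Row x of the triangle T_m, as the sequence of its entries in columns
   0..x-1.  Row 0 is a dummy (empty) row. *)
Fixpoint Trow (m x : nat) : seq nat :=
  match x with
  | 0 => [::]
  | 1 => [:: 1]
  | x'.+1 => let r := Trow m x' in rot (m %% x') r ++ [:: (head 0 r).+1]
  end.

Definition T (m x c : nat) : nat := nth 0 (Trow m x) c.

Definition is_l (m : nat) (L : nat -> nat) : Prop :=
  L 1 = 1 /\
  forall n, 2 <= n ->
    [/\ L n.-1 < L n, T m (L n) 0 = 1 &
        forall x, L n.-1 < x < L n -> T m x 0 <> 1].

(* Main.v *)
Require Import Defs.
From mathcomp Require Import all_boot all_algebra zify ring.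
Import GRing.Theory Num.Theory.

Lemma nth_rot' (s : seq nat) n i : n < size s -> i < size s ->
  nth 0 (rot n s) i = nth 0 s ((i + n) %% size s).
Proof.
move=> hn hi; rewrite /rot nth_cat size_drop.
case: (ltnP i (size s - n)) => hin.
  rewrite nth_drop modn_small; last by lia.
  by rewrite addnC.
rewrite nth_take; last by lia.
have -> : i + n = (i + n - size s) + size s by lia.
rewrite modnDr modn_small; last by lia.
congr nth; lia.
Qed.

Fixpoint P (x : nat) : nat :=
  match x with
  | 0 => 0
  | 1 => 0
  | x'.+1 => (P x' + x' - 2 %% x') %% x'
  end.

Lemma P_S x : 0 < x -> P x.+1 = (P x + x - 2 %% x) %% x.
Proof. by case: x. Qed.

Lemma Trow_S x : 0 < x -> Trow 2 x.+1 =
  rot (2 %% x) (Trow 2 x) ++ [:: (head 0 (Trow 2 x)).+1].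
Proof. by case: x. Qed.

Lemma inv x : 0 < x ->
  [/\ size (Trow 2 x) = x, P x < x,
      forall i, i < x -> 0 < nth 0 (Trow 2 x) i &
      forall i, i < x -> (nth 0 (Trow 2 x) i == 1) = (i == P x)].
Proof.
elim: x => // x IH _.
case: (posnP x) => [->|xpos].
  by split => //= i; rewrite ltnS leqn0 => /eqP ->.
have [hs hp hpos heq] := IH xpos.
have hm : 2 %% x < x by rewrite ltn_mod.
rewrite Trow_S // P_S //.
set r := Trow 2 x in hs hpos heq *.
have hP : (P x + x - 2 %% x) %% x < x by rewrite ltn_mod.
split.
- by rewrite size_cat size_rot hs addn1.
- by apply: ltn_trans hP _.
- move=> i hi; rewrite nth_cat size_rot hs.
  case: (ltnP i x) => hix.
    rewrite nth_rot' ?hs //; apply: hpos; by rewrite ltn_mod.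
  have -> : i - x = 0 by lia.
  by [].
- move=> i hi; rewrite nth_cat size_rot hs.
  case: (ltnP i x) => hix.
    rewrite nth_rot' ?hs // heq; last by rewrite ltn_mod.
    have g2 : ((P x + x - 2 %% x) %% x + 2 %% x) %% x = P x.
      rewrite modnDml subnK; last by lia.
      by rewrite modnDr modn_small.
    apply/eqP/eqP => [e|->] //.
    rewrite -g2 in e; move/eqP: e; rewrite eqn_modDr modn_mod.
    by rewrite (modn_small hix) => /eqP.
  have -> : i - x = 0 by lia.
  have h0 := hpos 0 xpos.
  rewrite /= -nth0.
  have -> : (nth 0 r 0).+1 == 1 = false by apply/negbTE; lia.
  symmetry; apply/negbTE; lia.
Qed.

Lemma T_P x : 0 < x -> (T 2 x 0 = 1) <-> (P x = 0).
Proof.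
move=> hx; have [_ _ _ heq] := inv x hx.
rewrite /T; split => [e|e].
  by move: (heq 0 hx); rewrite e eqxx => /esym/eqP.
by apply/eqP; rewrite heq // e.
Qed.

Lemma P_lt x : 0 < x -> P x < x.
Proof. by move=> hx; have [] := inv x hx. Qed.

Lemma descend x q j : 0 < x -> P x = q -> 2 * j <= q -> P (x + j) = q - 2 * j.
Proof.
move=> hx hq; elim: j => [|j IH] hj; first by rewrite addn0 subn0.
have e : P (x + j) = q - 2 * j by apply: IH; lia.
have lt := P_lt (x + j) ltac:(lia).
rewrite addnS P_S; last by lia.
rewrite e (modn_small (_ : 2 < x + j)); last by lia.
have -> : q - 2 * j + (x + j) - 2 = (q - 2 * j.+1) + (x + j) by lia.
rewrite modnDr modn_small //; lia.
Qed.

Lemma P_after0 x : 1 < x -> P x = 0 -> P x.+1 = x - 2.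
Proof.
move=> hx e; rewrite P_S; last by lia.
rewrite e add0n.
case: (ltnP 2 x) => h2.
  by rewrite (modn_small h2) modn_small //; lia.
have -> : x = 2 by lia.
by [].
Qed.

Lemma P_after1 x : 1 < x -> P x = 1 -> P x.+1 = x - 1.
Proof.
move=> hx e; rewrite P_S; last by lia.
rewrite e.
case: (ltnP 2 x) => h2.
  by rewrite (modn_small h2) modn_small //; lia.
have -> : x = 2 by lia.
by [].
Qed.

Definition Fz y z := [/\ P z = 0, y <= z & forall w, y <= w < z -> P w <> 0].

Lemma desc_even x h : 0 < x -> P x = 2 * h -> Fz x (x + h).
Proof.
move=> hx e; split; last first.
- move=> w /andP [h1 h2].
  have -> : w = x + (w - x) by lia.
  rewrite (descend _ _ _ hx e); lia.
- lia.
- rewrite (descend _ _ _ hx e) //; lia.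
Qed.

Lemma desc_odd x h : 0 < x -> P x = 2 * h + 1 ->
  P (x + h) = 1 /\ forall w, x <= w <= x + h -> P w <> 0.
Proof.
move=> hx e; split.
  rewrite (descend _ _ _ hx e) //; lia.
move=> w /andP [h1 h2].
have -> : w = x + (w - x) by lia.
rewrite (descend _ _ _ hx e); lia.
Qed.

Lemma Fz_trans y y' z : y <= y' -> (forall w, y <= w < y' -> P w <> 0) ->
  Fz y' z -> Fz y z.
Proof.
move=> hy hw [h1 h2 h3]; split => //; first lia.
move=> w /andP [a b]; case: (ltnP w y') => c.
  apply: hw; lia.
apply: h3; lia.
Qed.

Local Open Scope ring_scope.

Lemma chain m : forall (y : nat) (a b c : int), (1 < y)%N -> b = 2 * c + 1 ->
  P y = (y - 2)%N -> y%:Z = 2 ^+ m.+1 * a + 1 + b * 2 ^+ m ->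
  exists z, Fz y z /\ 2 * z%:Z = 2 * 3 ^+ m.+1 * a + 3 ^+ m.+1 * b + 1.
Proof.
elim: m => [|m IH] y a b c hy hb hP hyz.
  move: hyz; rewrite !expr0 expr1 mulr1 => hyz.
  exists (y + (y - 2) %/ 2)%N; split.
    apply: desc_even; first lia.
    rewrite hP; lia.
  rewrite expr1; lia.
set X := 2 ^+ m in hyz IH *.
have eX : 2 ^+ m.+2 = 4 * X :> int by rewrite !exprS /X; ring.
have eX1 : 2 ^+ m.+1 = 2 * X :> int by rewrite !exprS /X; ring.
rewrite eX eX1 in hyz.
set h := ((y - 3) %/ 2)%N.
have ey : y = (2 * h + 3)%N by lia.
have [h1 h2] := desc_odd y h ltac:(lia) ltac:(lia).
have hP' : P (y + h).+1 = ((y + h).+1 - 2)%N.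
  rewrite P_after1 //; lia.
have [z [hz ez]] := IH (y + h).+1 (3 * a) (3 * b) (3 * c + 1) ltac:(lia)
  ltac:(rewrite hb; ring) hP' ltac:(rewrite eX1; lia).
exists z; split.
  apply: Fz_trans hz; first lia.
  move=> w hw; apply: h2; lia.
rewrite ez (exprS _ m.+1); ring.
Qed.

Lemma pow_m2 k : exists t : int, (-2) ^+ k = 1 + 3 * t.
Proof.
elim: k => [|k [t ht]]; first by exists 0; rewrite expr0; ring.
exists (-1 - 2 * t); rewrite exprS ht; ring.
Qed.

Lemma pow_m3 k : exists t : int, (-3) ^+ k = 1 + 2 * t.
Proof.
elim: k => [|k [t ht]]; first by exists 0; rewrite expr0; ring.
exists (-2 - 3 * t); rewrite exprS ht; ring.
Qed.

Lemma pow_m1 k : exists t : int, (-1) ^+ k = 2 * t + 1.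
Proof.
elim: k => [|k [t ht]]; first by exists 0; rewrite expr0; ring.
exists (- t - 1); rewrite exprS ht; ring.
Qed.

Lemma negpow (a : int) k : (- a) ^+ k = (-1) ^+ k * a ^+ k.
Proof. by rewrite -exprMn mulN1r. Qed.

Theorem mainTheorem18 (L : nat -> nat) (hL : is_l 2 L)
    (n k : nat) (s : int) (hn : (0 < n)%N)
    (h : (L n)%:Z = 2 ^+ k.+1 * s + ((1 - (-2) ^+ k) %/ 3)%Z) :
  (L n.+1)%:Z = 3 ^+ k.+1 * s + ((1 - (-3) ^+ k) %/ 2)%Z.
Proof.
move: hL => [hL1 hLs].
have [lt1 T1 nT] := hLs n.+1 ltac:(lia).
rewrite /= in lt1 nT.
set x := L n in h lt1 nT *.
have [hx1 hPx] : (0 < x)%N /\ P x = 0.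
  case: (ltnP 1 n) => hn2.
    have [a b _] := hLs n hn2.
    have hxp : (0 < x)%N by lia.
    split => //; exact: (proj1 (T_P x hxp) b).
  have -> : x = 1%N by rewrite /x; have -> : n = 1%N by lia.
  by [].
suff [z [[hz0 hz1 hz2] ez]] : exists z : nat, Fz x.+1 z /\
    z%:Z = 3 ^+ k.+1 * s + ((1 - (-3) ^+ k) %/ 2)%Z.
  rewrite -ez; congr (Posz _).
  case: (ltngtP (L n.+1) z) => // c.
  - exfalso; apply: (hz2 (L n.+1)); first lia.
    exact: (proj1 (T_P (L n.+1) ltac:(lia)) T1).
  - exfalso; apply: (nT z); first lia.
    exact: (proj2 (T_P z ltac:(lia)) hz0).
case: k h => [|k] h.
  move: h; rewrite !expr0 subrr div0z addr0 expr1 => h.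
  have hP1 : P x.+1 = (2 * ((x - 2) %/ 2))%N.
    rewrite P_after0 //; lia.
  exists (x.+1 + (x - 2) %/ 2)%N; split.
    by apply: desc_even.
  rewrite expr1 div0z addr0; lia.
have [t ht] := pow_m2 k.+1.
have [t' ht'] := pow_m3 k.+1.
have [c hc] := pow_m1 k.
have e2 : (-2) ^+ k.+1 = - 2 * ((-1) ^+ k * 2 ^+ k) :> int.
  by rewrite exprS negpow.
have e3 : (-3) ^+ k.+1 = - 3 * ((-1) ^+ k * 3 ^+ k) :> int.
  by rewrite exprS negpow.
have d2 : ((1 - (-2) ^+ k.+1) %/ 3)%Z = - t.
  by rewrite ht (_ : 1 - (1 + 3 * t) = 3 * - t); [rewrite mulKz | ring].
have d3 : ((1 - (-3) ^+ k.+1) %/ 2)%Z = - t'.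
  by rewrite ht' (_ : 1 - (1 + 2 * t') = 2 * - t'); [rewrite mulKz | ring].
rewrite d3; rewrite d2 in h.
set B := (-1) ^+ k in hc e2 e3.
set X := 2 ^+ k in e2 h.
set Y := 3 ^+ k in e3.
have eX : 2 ^+ k.+2 = 4 * X :> int by rewrite !exprS /X; ring.
have eY : 3 ^+ k.+2 = 9 * Y :> int by rewrite !exprS /Y; ring.
have eY1 : 3 ^+ k.+1 = 3 * Y :> int by rewrite !exprS /Y; ring.
have eX1 : 2 ^+ k.+1 = 2 * X :> int by rewrite !exprS /X; ring.
rewrite eX in h; rewrite eY.
have hxz : 3 * x%:Z = 12 * (X * s) + 1 + 2 * (B * X).
  rewrite h; move: ht; rewrite e2 => ht; lia.
have [y [hy2 hPy hyx hFy]] : exists y : nat, [/\ (1 < y)%N, P y = (y - 2)%N,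
    2 * y%:Z = 3 * x%:Z + 1 & forall z, Fz y z -> Fz x.+1 z].
  case: (ltnP 1 x) => hx.
    set h' := ((x - 3) %/ 2)%N.
    have hPx1 : P x.+1 = (2 * h' + 1)%N by rewrite P_after0 //; lia.
    have [g1 g2] := desc_odd x.+1 h' isT hPx1.
    exists (x.+1 + h').+1; split.
    - lia.
    - rewrite P_after1 //; lia.
    - lia.
    - move=> z hz; apply: Fz_trans hz; first lia.
      move=> w hw; apply: g2; lia.
  have x1 : x = 1%N by lia.
  exists 2%N; split.
  - by [].
  - by [].
  - rewrite x1; lia.
  - by rewrite x1.
have [z [hz ez]] := chain k y (3 * s) B c hy2 hc hPy
  ltac:(rewrite eX1; lia).
exists z; split; first exact: hFy.
move: ez; rewrite eY1 => ez.
move: ht'; rewrite e3 => ht'.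
lia.
Qed.
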